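(* For every integer $h\ge 2$ there exist instances of the atomic model under the proportional-to-squares scheme whose Price of Stability is at least $\frac{h-1}{2}$.
   Context: Atomic model: finitely many players, player $i$ with stake $a_i>0$, $a_i<h$; threshold $h$. Each player opens her own pool or joins one; pools partition the players. A pool $C$ has reward $\rho(C)=1$ if its total stake is at least $h$ (winning) and $0$ otherwise. Proportional-to-squares scheme: player $i$ in pool $C$ receives $\frac{a_i^2}{\sum_{j\in C}a_j^2}\rho(C)$. A partition into winning pools is a Nash equilibrium if no player can strictly increase her payment by moving to another pool or opening a new pool alone. $OPT(G)$ is the maximum number of pools of stake at least $h$ in a partition of the players; $W(\Pi)$ is the number of winning pools of $\Pi$; the Price of Stability is $\min_\Pi OPT(G)/W(\Pi)$ over Nash equilibrium partitions. *)

(* Defs.v *)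
From mathcomp Require Import all_boot all_order all_algebra.
Set Implicit Arguments. Unset Strict Implicit. Unset Printing Implicit Defensive.
Import Order.TTheory GRing.Theory Num.Theory.
Local Open Scope ring_scope.

Section Game.
Variables (R : realFieldType) (n : nat) (a : 'I_n -> R) (h : nat).

Definition stake (C : {set 'I_n}) : R := \sum_(j in C) a j.

Definition winning (C : {set 'I_n}) : bool := h%:R <= stake C.
Definition rho (C : {set 'I_n}) : R := if winning C then 1 else 0.

Definition payment (i : 'I_n) (C : {set 'I_n}) : R :=
  a i ^+ 2 / (\sum_(j in C) a j ^+ 2) * rho C.

Definition W (P : {set {set 'I_n}}) : nat := #|[set C in P | winning C]|.

Definition OPT : nat :=
  \max_(P : {set {set 'I_n}} | partition P [set: 'I_n]) W P.

Definition is_NE (P : {set {set 'I_n}}) : Prop :=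
  [/\ partition P [set: 'I_n],
      (forall C, C \in P -> winning C) &
      forall i : 'I_n,
        (forall C', C' \in P -> C' != pblock P i ->
           payment i (C' :|: [set i]) <= payment i (pblock P i)) /\
        payment i [set i] <= payment i (pblock P i)].

End Game.

(* Main.v *)
Require Import Defs.
From mathcomp Require Import all_boot all_order all_algebra ring lra zify.
Import Order.TTheory GRing.Theory Num.Theory.
Local Open Scope ring_scope.

Section Inst.
Variables (R : realFieldType) (h : nat).
Hypothesis h2 : (2 <= h)%N.

Definition nn := (h * (h - 1)).+2.
Definition gg : R := h%:R - 2^-1.
Definition aa (i : 'I_nn) : R := if i == ord0 then gg else 1.

Lemma hR : 2 <= h%:R :> R.
Proof. by rewrite (ler_nat R 2 h). Qed.

Lemma aa_ge1 i : 1 <= aa i.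
Proof. rewrite /aa /gg; case: ifP => _ //; have := hR; lra. Qed.

Lemma aa_lt i : aa i < h%:R.
Proof. rewrite /aa /gg; case: ifP => _; have := hR; lra. Qed.

Lemma aa1 i : i != ord0 -> aa i = 1.
Proof. by rewrite /aa => /negbTE ->. Qed.

Lemma sum_noord0 (D : {set 'I_nn}) k : ord0 \notin D ->
  \sum_(j in D) aa j ^+ k = #|D|%:R.
Proof.
move=> H; rewrite (eq_bigr (fun=> 1)) ?sumr_const //.
move=> j jD; rewrite aa1 ?expr1n //; apply/eqP => E; move: H; by rewrite -E jD.
Qed.

Lemma sum_noord1 (D : {set 'I_nn}) : ord0 \notin D ->
  \sum_(j in D) aa j = #|D|%:R.
Proof. move=> H; rewrite -(sum_noord0 D 1%N H); apply: eq_bigr => j _; by rewrite expr1. Qed.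

Lemma sum2 (F : 'I_nn -> R) (C : {set 'I_nn}) x y : (forall j, 0 <= F j) ->
  x \in C -> y \in C -> x != y -> F x + F y <= \sum_(j in C) F j.
Proof.
move=> F0 xC yC xy; rewrite (bigD1 x) //= (bigD1 y) /=; last by rewrite yC eq_sym.
by rewrite addrA lerDl sumr_ge0.
Qed.

Lemma stake_card (C : {set 'I_nn}) : #|C|%:R <= stake aa C.
Proof.
rewrite /stake -sumr_const; apply: ler_sum => j _; exact: aa_ge1.
Qed.

Lemma pay_ge0 i (C : {set 'I_nn}) : 0 <= payment aa h i C.
Proof.
rewrite /payment /rho; case: ifP => _; rewrite ?mulr0 ?mulr1 //.
by rewrite divr_ge0 ?sqr_ge0 // sumr_ge0 // => j _; rewrite sqr_ge0.
Qed.

Lemma NE_one P : is_NE aa h P -> forall C, C \in P -> C = pblock P ord0.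
Proof.
case=> /and3P [/eqP Hcov Htriv H0] Hwin Hdev C CP.
set C0 := pblock P ord0.
have o0cov : ord0 \in cover P by rewrite Hcov inE.
have C0P : C0 \in P by exact: pblock_mem.
have o0C0 : ord0 \in C0 by rewrite mem_pblock.
have [i iC0 io] : exists2 i, i \in C0 & i != ord0.
  case: (pickP [pred j | (j \in C0) && (j != ord0)]) => [j /andP[] jC jo|Hn].
    by exists j.
  have := Hwin _ C0P; rewrite /winning /stake.
  rewrite (eq_bigl (fun j => j \in [set ord0])); last first.
    move=> j; rewrite in_set1; apply/idP/eqP => [jC|->//].
    by apply/eqP/negPn; have := Hn j; rewrite /= jC; move/negbT.
  rewrite big_set1 => H; have := aa_lt ord0; rewrite ltNge H //.
have pbi : pblock P i = C0 by apply: def_pblock.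
case: (eqVneq C C0) => // CC0; exfalso.
have [Hle _] := Hdev i.
have := Hle C CP; rewrite pbi => /(_ CC0).
have dis : [disjoint C & C0] by move/trivIsetP: Htriv => /(_ C C0 CP C0P CC0).
have o0C : ord0 \notin C by rewrite (disjointFl dis o0C0).
have iC : i \notin C by rewrite (disjointFl dis iC0).
have o0Ci : ord0 \notin C :|: [set i].
  by rewrite !inE negb_or o0C eq_sym io.
have cardCi : #|C :|: [set i]| = #|C|.+1 by rewrite setUC cardsU1 iC.
have winC := Hwin _ CP.
rewrite /payment /rho /winning /stake sum_noord0 // sum_noord1 // cardCi.
have -> : (h%:R <= (#|C|.+1)%:R :> R).
  move: winC; rewrite /winning /stake sum_noord1 // => /le_trans; apply.
  by rewrite ler_nat.
have := Hwin _ C0P; rewrite /winning => -> .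
rewrite !mulr1 aa1 // expr1n !div1r.
set Q0 := \sum_(j in C0) aa j ^+ 2.
have Q0ge : gg ^+ 2 + 1 <= Q0.
  have := @sum2 (fun j => aa j ^+ 2) C0 ord0 i (fun j => sqr_ge0 _) o0C0 iC0 (ltac:(by rewrite eq_sym)).
  by rewrite /= (aa1 _ io) expr1n {1}/aa eqxx.
have Q0p : 0 < Q0 by apply: lt_le_trans Q0ge; rewrite ltr_pwDr ?sqr_ge0.
rewrite lef_pV2 ?posrE ?ltr0n // => HQ.
have cardC : (#|C| <= h * (h - 1))%N.
  have sub : C \subset ~: [set ord0; i].
    apply/subsetP => j jC; rewrite !inE negb_or; apply/andP; split; apply/eqP => E.
      by move: o0C; rewrite -E jC.
    by move: iC; rewrite -E jC.
  have := subset_leq_card sub; have := cardsC [set ord0; i].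
  rewrite cards2 eq_sym io card_ord /nn add2n; case=> ->; exact.
have : (#|C|%:R <= (h * (h - 1))%:R :> R) by rewrite ler_nat.
have E : gg ^+ 2 = (h * (h - 1))%:R + 4^-1 :> R.
  by rewrite natrM natrB ?(leq_trans _ h2) // /gg; field.
move: HQ Q0ge; rewrite E -natr1; set y := (h * (h - 1))%:R; set c := #|C|%:R; lra.
Qed.

Lemma grand_NE : is_NE aa h [set [set: 'I_nn]].
Proof.
have pb : forall i : 'I_nn, pblock [set [set: 'I_nn]] i = [set: 'I_nn].
  by move=> i; apply: def_pblock; rewrite ?trivIset1 ?set11 ?inE.
split.
- apply/and3P; split; first by rewrite cover1.
    exact: trivIset1.
  rewrite in_set1; apply/eqP => E; have := in_setT (ord0 : 'I_nn); by rewrite -E inE.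
- move=> C /set1P ->; rewrite /winning; apply: le_trans (stake_card _).
  rewrite cardsT card_ord ler_nat /nn; apply: leqW; apply: leqW.
  by apply: leq_pmulr; rewrite subn_gt0.
- move=> i; split.
    by move=> C' /set1P ->; rewrite pb eqxx.
  apply: le_trans (pay_ge0 _ _).
  rewrite /payment /rho /winning /stake !big_set1; have := aa_lt i; rewrite ltNge => /negbTE ->; by rewrite mulr0.
Qed.

Lemma inordK' m : (m < nn)%N -> nat_of_ord (inord m : 'I_nn) = m.
Proof. exact: inordK. Qed.

Definition ff (i : 'I_nn) : nat := (i %/ h)%N.
Definition BB (k : nat) : {set 'I_nn} := [set y : 'I_nn | ff y == k].

Lemma h0 : (0 < h)%N. Proof. exact: leq_trans h2. Qed.

Lemma lt_nn k j : (k < h - 1)%N -> (j < h)%N -> (k * h + j < nn)%N.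
Proof.
move=> hk hj; apply: (@leq_trans (k * h + h)); first by rewrite ltn_add2l.
rewrite -mulSnr /nn mulnC; apply: leqW; apply: leqW; by rewrite leq_mul2l hk orbT.
Qed.

Lemma ffE k j : (j < h)%N -> ((k * h + j) %/ h)%N = k.
Proof. by move=> hj; rewrite divnMDl ?h0 // divn_small // addn0. Qed.

Lemma BB_in k : (k < h - 1)%N -> BB k \in preim_partition ff setT.
Proof.
move=> hk; apply/imsetP; exists (inord (k * h)); first by rewrite inE.
apply/setP => y; rewrite !inE /ff inordK'; last by have := lt_nn _ _ hk h0; rewrite addn0.
by rewrite mulnK ?h0 // eq_sym.
Qed.

Lemma BB_win k : (k < h - 1)%N -> winning aa h (BB k).
Proof.
move=> hk; rewrite /winning; apply: le_trans (stake_card _); rewrite ler_nat.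
have -> : h = #|[set (inord (k * h + val j) : 'I_nn) | j : 'I_h]|.
  rewrite card_imset ?card_ord // => j j' /(congr1 (@nat_of_ord nn)).
  rewrite !inordK' ?lt_nn ?ltn_ord // => /addnI; exact: val_inj.
apply: subset_leq_card; apply/subsetP => y /imsetP [j _ ->].
by rewrite inE /ff inordK' ?lt_nn ?ltn_ord // ffE ?ltn_ord.
Qed.

Lemma OPT_ge : (h - 1 <= OPT aa h)%N.
Proof.
rewrite /OPT; apply: leq_trans (@leq_bigmax_cond _ (fun P => partition P [set: 'I_nn]) (W aa h) _ (preim_partitionP ff [set: 'I_nn])).
rewrite /W.
have -> : (h - 1 = #|[set BB (val k) | k : 'I_(h - 1)]|)%N.
  rewrite card_imset ?card_ord // => k k' E.
  have : (inord (val k * h) : 'I_nn) \in BB k by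
    rewrite inE /ff inordK'; [rewrite mulnK ?h0 | have := lt_nn _ _ (ltn_ord k) h0; rewrite addn0].
  rewrite E inE /ff inordK'; last by have := lt_nn _ _ (ltn_ord k) h0; rewrite addn0.
  by rewrite mulnK ?h0 // => /eqP; apply: val_inj.
apply: subset_leq_card; apply/subsetP => C /imsetP [k _ ->].
by rewrite inE BB_in ?ltn_ord //= BB_win ?ltn_ord.
Qed.

End Inst.

Theorem theorem6p1 (R : realFieldType) (h : nat) : (2 <= h)%N ->
  exists (n : nat) (a : 'I_n -> R),
    (forall i, 0 < a i /\ a i < h%:R) /\
    (exists P, is_NE a h P) /\
    (forall P, is_NE a h P ->
       (0 < W a h P)%N /\
       (h%:R - 1) / 2 <= (OPT a h)%:R / (W a h P)%:R :> R).
Proof.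
move=> h2; exists (nn h), (@aa R h); split; [|split].
- move=> i; split; last exact: (@aa_lt R h h2).
  exact: lt_le_trans ltr01 (@aa_ge1 R h h2 i).
- by exists [set setT]; exact: (@grand_NE R h h2).
- move=> P NE.
  have W1 : W (@aa R h) h P = 1%N.
    have NE' := NE; case: NE' => /and3P [/eqP Hcov _ _] Hwin _.
    have C0P : pblock P ord0 \in P by apply: pblock_mem; rewrite Hcov inE.
    rewrite /W (_ : [set C in P | winning _ h C] = [set pblock P ord0]) ?cards1 //.
    apply/setP => C; rewrite !inE; apply/andP/eqP => [[CP _]|->].
      exact: (@NE_one R h h2 P NE).
    by split; [|apply: Hwin].
  rewrite W1 divr1; split => //.
  have := @OPT_ge R h h2; rewrite -(ler_nat R) natrB ?(leq_trans _ h2) //.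
  have := @hR R h h2; lra.
Qed.
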